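(* Let $S\in\mathbb{R}^{m\times n}$ and $x_0\in\mathbb{R}^d$. Let $(x_t)_{t\geqslant0}$ be any sequence satisfying $x_{t+1}\in x_0+H_S^{-1}\,\mathrm{span}\{\nabla f(x_0),\dots,\nabla f(x_t)\}$ for all $t\geqslant0$. Then for every $t\geqslant1$, $$\delta_t\geqslant \ell^*_t(S,x_0):=\frac12\min_{Q\in\mathbb{R}_t[X],\,Q(0)=1}\ \sum_{i=1}^d Q(\lambda_i^{-1})^2\,\xi_i^2 .$$
   Context: Let $A\in\mathbb{R}^{n\times d}$ with $n\geqslant d$, $b\in\mathbb{R}^d$, $\Lambda\in\mathbb{R}^{d\times d}$ diagonal with $\Lambda\succeq I_d$, and $\nu>0$. Set $H=A^\top A+\nu^2\Lambda$, $f(x)=\frac12 x^\top Hx-b^\top x$, $x^*=H^{-1}b$. For $S\in\mathbb{R}^{m\times n}$ set $H_S=A^\top S^\top SA+\nu^2\Lambda$ and $C_S=H^{-1/2}H_SH^{-1/2}$, with eigenvalue decomposition $C_S=\sum_{i=1}^d\lambda_iv_iv_i^\top$ ($\lambda_1\geqslant\dots\geqslant\lambda_d>0$, orthonormal $v_i$). Let $\xi_i=\langle v_i,H^{1/2}(x_0-x^* )\rangle$, $\delta_t=\frac12\|x_t-x^*\|_H^2$ with $\|z\|_H^2=z^\top Hz$, and let $\mathbb{R}_t[X]$ denote the real polynomials of degree at most $t$. *)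

(* Defs.v *)
From HB Require Import structures.
From mathcomp Require Import all_boot all_order all_algebra.
From mathcomp Require Import classical_sets reals.
Set Implicit Arguments. Unset Strict Implicit. Unset Printing Implicit Defensive.
Import Order.TTheory GRing.Theory Num.Theory.
Local Open Scope ring_scope.

Section Defs.
Variable R : realType.

Definition Hmat (n d : nat) (A : 'M[R]_(n, d)) (Lam : 'M[R]_d) (nu : R) : 'M[R]_d :=
  A^T *m A + (nu ^+ 2) *: Lam.

Definition HSmat (m n d : nat) (S : 'M[R]_(m, n)) (A : 'M[R]_(n, d))
  (Lam : 'M[R]_d) (nu : R) : 'M[R]_d :=
  A^T *m S^T *m S *m A + (nu ^+ 2) *: Lam.

Definition fobj (d : nat) (H : 'M[R]_d) (b : 'cV[R]_d) (x : 'cV[R]_d) : R :=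
  2^-1 * (x^T *m H *m x) ord0 ord0 - (b^T *m x) ord0 ord0.

(* gradient of f (H symmetric): grad f(x) = H x - b *)
Definition grad_f (d : nat) (H : 'M[R]_d) (b : 'cV[R]_d) (x : 'cV[R]_d) : 'cV[R]_d :=
  H *m x - b.

Definition xstar (d : nat) (H : 'M[R]_d) (b : 'cV[R]_d) : 'cV[R]_d := invmx H *m b.

Definition Hnorm2 (d : nat) (H : 'M[R]_d) (z : 'cV[R]_d) : R := (z^T *m H *m z) ord0 ord0.

Definition delta (d : nat) (H : 'M[R]_d) (b : 'cV[R]_d) (x : 'cV[R]_d) : R :=
  2^-1 * Hnorm2 H (x - xstar H b).

(* ell*_t = 1/2 min_{Q in R_t[X], Q(0)=1} sum_i Q(lam_i^{-1})^2 xi_i^2 ;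
   the min (which is attained) is written as an infimum. *)
Definition ell_star (d : nat) (t : nat) (lam xi : 'I_d -> R) : R :=
  2^-1 * inf ([set y : R | exists Q : {poly R},
     (size Q <= t.+1)%N /\ Q.[0] = 1 /\
     y = \sum_(i < d) (Q.[(lam i)^-1]) ^+ 2 * (xi i) ^+ 2])%classic.

End Defs.

(* Main.v *)
Require Import Defs.
From HB Require Import structures.
From mathcomp Require Import all_boot all_order all_algebra.
From mathcomp Require Import classical_sets reals.
From Stdlib Require Import FunctionalExtensionality.
Import Order.TTheory GRing.Theory Num.Theory.
Local Open Scope ring_scope.

Lemma main_ind (R : realType) (d : nat) (lam : 'I_d -> R) (w : nat -> 'cV[R]_d) :
  (forall t, exists c : 'I_t.+1 -> R,
    w t.+1 = w 0%N + diag_mx (\row_i (lam i)^-1) *m \sum_(k < t.+1) c k *: w k) ->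
  forall t, exists Qs : nat -> {poly R}, forall k, (k <= t)%N ->
   [/\ (size (Qs k) <= k.+1)%N, (Qs k).[0] = 1 &
      forall i, w k i ord0 = (Qs k).[(lam i)^-1] * w 0%N i ord0].
Proof.
move=> wrec.
  elim => [|t0 IH].
    exists (fun _ => 1) => k; rewrite leqn0 => /eqP ->.
    by split; rewrite ?size_poly1 ?hornerC // => i; rewrite hornerC mul1r.
  have [Qs hQ] := IH; have [c hc] := wrec t0.
  pose Qn : {poly R} := 1 + 'X * \sum_(k < t0.+1) c k *: Qs k.
  exists (fun k => if k == t0.+1 then Qn else Qs k) => k.
  case: eqP => [->|ne] hk; last by apply: hQ; rewrite -ltnS ltn_neqAle hk andbT; apply/eqP.
  split.
  - have hs : (size (\sum_(k < t0.+1) c k *: Qs k)%R <= t0.+1)%N.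
      apply: (big_ind (fun p : {poly R} => (size p <= t0.+1)%N)).
      + by rewrite size_poly0.
      + by move=> p q hp hq; apply: leq_trans (size_polyD _ _) _; rewrite geq_max hp hq.
      move=> j _; apply: leq_trans (size_scale_leq _ _) _.
      have [h _ _] := hQ j (ltn_ord j : (j <= t0)%N); exact: leq_trans h (ltn_ord j).
    apply: leq_trans (size_polyD _ _) _; rewrite geq_max size_poly1 /=.
    apply: leq_trans (size_polyMleq _ _) _; rewrite size_polyX /=.
    by rewrite ltnS.
  - by rewrite hornerD hornerC hornerM hornerX mul0r addr0.
  - move=> i; rewrite hc mxE mul_diag_mx mxE /Qn !mxE hornerD hornerC hornerM hornerX.
    rewrite summxE horner_sum mulrDl mul1r; congr (_ + _).
    rewrite -mulrA; congr (_ * _); rewrite mulr_suml; apply: eq_bigr => j _.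
    have [_ _ h] := hQ j (ltn_ord j : (j <= t0)%N).
    by rewrite mxE h hornerZ mulrA.
Qed.

Theorem lemma3p1 (R : realType) (n d m : nat) (A : 'M[R]_(n, d)) (b : 'cV[R]_d)
  (lamb : 'rV[R]_d) (nu : R) (S : 'M[R]_(m, n)) (x0 : 'cV[R]_d)
  (P : 'M[R]_d) (V : 'M[R]_d) (lam : 'I_d -> R) (x : nat -> 'cV[R]_d) :
  (d <= n)%N ->
  (forall i, 1 <= lamb ord0 i) ->
  0 < nu ->
  (* P = H^{1/2}: the symmetric positive definite square root of H *)
  P^T = P ->
  (forall z : 'cV[R]_d, z != 0 -> 0 < (z^T *m P *m z) ord0 ord0) ->
  P *m P = Hmat A (diag_mx lamb) nu ->
  (* eigenvalue decomposition C_S = sum_i lam_i v_i v_i^T, v_i = i-th column of V *)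
  V^T *m V = 1%:M ->
  invmx P *m HSmat S A (diag_mx lamb) nu *m invmx P = V *m diag_mx (\row_i lam i) *m V^T ->
  (forall i j : 'I_d, (i <= j)%N -> lam j <= lam i) ->
  (forall i, 0 < lam i) ->
  (* the iterates *)
  x 0%N = x0 ->
  (forall t : nat, exists c : 'I_t.+1 -> R,
     x t.+1 = x0 + invmx (HSmat S A (diag_mx lamb) nu) *m
       \sum_(k < t.+1) c k *: grad_f (Hmat A (diag_mx lamb) nu) b (x k)) ->
  forall t : nat, (1 <= t)%N ->
    delta (Hmat A (diag_mx lamb) nu) b (x t) >=
    ell_star t lam (fun i => ((col i V)^T *m P *m
                         (x0 - xstar (Hmat A (diag_mx lamb) nu) b)) ord0 ord0).
Proof.
move=> _ _ _ PT Ppd PP VtV hC _ lam0 x00 hx t _.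
set H := Hmat A (diag_mx lamb) nu in PP hx *.
set HS := HSmat S A (diag_mx lamb) nu in hC hx *.
set xs := xstar H b.
set D := diag_mx (\row_i lam i) in hC.
pose Dinv : 'M[R]_d := diag_mx (\row_i (lam i)^-1).
have Pu : P \in unitmx.
  rewrite unitmxE unitfE; apply/negP => /det0P [v v0 vP].
  have : v^T != 0 by apply: contra v0 => /eqP h; rewrite -[v]trmxK h trmx0.
  move=> /Ppd; rewrite trmxK vP mul0mx mxE ltxx //.
have [Vu _] := mulmx1_unit VtV.
have VVt : V *m V^T = 1%:M by apply: mulmx1C.
have DDinv : D *m Dinv = 1%:M.
  apply/matrixP => i j; rewrite mul_diag_mx !mxE.
  case: (eqVneq i j) => [->|ne]; first by rewrite mulr1n divff // gt_eqF.
  by rewrite !mulr0n mulr0.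
have HSe : HS = P *m (V *m D *m V^T) *m P.
  by rewrite -hC !mulmxA mulmxV // mul1mx -mulmxA mulVmx // mulmx1.
have HSinv : invmx HS = invmx P *m V *m Dinv *m V^T *m invmx P.
  have h1 : HS *m (invmx P *m V *m Dinv *m V^T *m invmx P) = 1%:M.
    rewrite HSe !mulmxA mulmxK // -(mulmxA _ V^T V) VtV mulmx1.
    by rewrite -(mulmxA _ D Dinv) DDinv mulmx1 -(mulmxA P V V^T) VVt mulmx1 mulmxV.
  have [HSu _] := mulmx1_unit h1.
  by rewrite -[LHS]mulmx1 -h1 mulmxA mulVmx // mul1mx.
have Hu : H \in unitmx by rewrite -PP unitmx_mul Pu.
have gradE : forall k, grad_f H b (x k) = H *m (x k - xs).
  by move=> k; rewrite /grad_f mulmxBr /xs /xstar mulmxA mulmxV // mul1mx.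
have K : V^T *m P *m invmx HS *m H = Dinv *m V^T *m P.
  by rewrite HSinv -PP !mulmxA mulmxK // VtV mul1mx mulmxKV.
pose w k := V^T *m P *m (x k - xs).
pose xi i := w 0%N i ord0.
have wrec : forall t, exists c : 'I_t.+1 -> R,
    w t.+1 = w 0%N + Dinv *m \sum_(k < t.+1) c k *: w k.
  move=> t0; have [c hc] := hx t0; exists c.
  rewrite /w hc x00 addrAC mulmxDr; congr (_ + _).
  rewrite !mulmxA !mulmx_sumr; apply: eq_bigr => k _.
  by rewrite gradE -!scalemxAr mulmxA K -!mulmxA.
have main := @main_ind R d lam w wrec.
have [Qs hQ] := main t; have [hs h0 hw] := hQ t (leqnn t).
have xiE : (fun i => ((col i V)^T *m P *m (x0 - xs)) ord0 ord0) = xi.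
  apply: functional_extensionality => i; rewrite /xi /w x00 tr_col -mulmxA -row_mul mxE -mulmxA //.
rewrite xiE /ell_star /delta; apply: ler_wpM2l; first by rewrite invr_ge0 ler0n.
have -> : Hnorm2 H (x t - xs) = \sum_(i < d) (Qs t).[(lam i)^-1] ^+ 2 * xi i ^+ 2.
  rewrite /Hnorm2 -PP.
  have -> : (x t - xs)^T *m (P *m P) *m (x t - xs) = (w t)^T *m w t.
    rewrite /w !trmx_mul PT trmxK !mulmxA -(mulmxA _ V) VVt mulmx1 //.
  rewrite mxE; apply: eq_bigr => i _; rewrite mxE hw -expr2 exprMn //.
refine (ge_inf _ _); last by exists (Qs t).
exists 0 => y [Q [_ [_ ->]]].
by apply: sumr_ge0 => i _; apply: mulr_ge0; apply: sqr_ge0.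
Qed.
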